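(* Let $n\ge 1$, let $\Omega\subseteq\mathbb R^n$ be open, and let $y:\Omega\to\mathbb R$ be a function of class $C^2$. Let $\mathbf Q$ be an arbitrary real $(n+2)\times(n+2)$ matrix, and suppose that for every $\mathbf x\in\Omega$, $$\mathbf v(\mathbf x)^\top\mathbf Q\,\mathbf v(\mathbf x)=0,\qquad\text{where }\mathbf v(\mathbf x)=\begin{bmatrix}\mathbf x\\ y(\mathbf x)\\ 1\end{bmatrix}\in\mathbb R^{n+2}.$$ Then, with $\mathbf H_y$ the Hessian matrix of $y$ and $\Delta_y$ the discriminant (defined below) of the left-hand side with respect to the variable $y$, the formula $$\det\!\big(\mp\mathbf H_y(\mathbf x)\big)\cdot\Delta_y(\mathbf x)^{n/2+1}=-\det\!\big(\mathbf Q+\mathbf Q^\top\big)$$ holds, where the sign $\mp$ depends on the selected branch of the square root function (i.e. on which root of the quadratic equation in $y$ the function $y$ is).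
   Context: The Hessian matrix $\mathbf H_y(\mathbf x)$ is the $n\times n$ matrix with entries $\partial^2 y/\partial x_i\partial x_j(\mathbf x)$. For fixed $\mathbf x$, the expression $\mathbf w^\top\mathbf Q\mathbf w$ with $\mathbf w=(\mathbf x, t, 1)^\top$ is a polynomial in the scalar variable $t$ of the form $\alpha t^2+\beta(\mathbf x)t+\gamma(\mathbf x)$, where $\alpha=Q_{n+1,n+1}$, $\beta(\mathbf x)=\sum_{i=1}^n (Q_{i,n+1}+Q_{n+1,i})x_i+Q_{n+1,n+2}+Q_{n+2,n+1}$ and $\gamma(\mathbf x)=\sum_{i,j=1}^n Q_{ij}x_ix_j+\sum_{i=1}^n(Q_{i,n+2}+Q_{n+2,i})x_i+Q_{n+2,n+2}$. The discriminant with respect to $y$ is $\Delta_y(\mathbf x)=\beta(\mathbf x)^2-4\alpha\gamma(\mathbf x)$ (a quadratic polynomial in $\mathbf x$). Here $\det$ denotes the determinant and $\Delta_y(\mathbf x)^{n/2+1}$ is the real power of the nonnegative number $\Delta_y(\mathbf x)$. The sign $\mp$ means $\det(-\mathbf H_y)$ or $\det(\mathbf H_y)$ according to the branch: writing (when $\alpha\neq0$) $y=\frac{-\beta\pm\sqrt{\Delta_y}}{2\alpha}$, the sign in the formula is opposite to the sign $\pm$ here; it only matters for odd $n$. *)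

(* Defs.v *)
From HB Require Import structures.
From mathcomp Require Import all_boot all_order all_algebra.
From mathcomp Require Import all_classical all_reals all_analysis.
Set Implicit Arguments. Unset Strict Implicit. Unset Printing Implicit Defensive.
Import Order.TTheory GRing.Theory Num.Theory.
Import numFieldNormedType.Exports.
Local Open Scope classical_set_scope.
Local Open Scope ring_scope.

Section Defs.
Variables (R : realType) (n : nat).

Definition evec (i : 'I_n) : 'rV[R]_n := delta_mx 0 i.

Definition partial (i : 'I_n) (f : 'rV[R]_n -> R) (x : 'rV[R]_n) : R :=
  'D_(evec i) f x.

Definition C2_on (Omega : set 'rV[R]_n) (f : 'rV[R]_n -> R) : Prop :=
  (forall x, Omega x -> {for x, continuous f}) /\
  forall i : 'I_n,
    (forall x, Omega x -> derivable f x (evec i)) /\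
    (forall x, Omega x -> {for x, continuous (partial i f)}) /\
    forall j : 'I_n,
      (forall x, Omega x -> derivable (partial i f) x (evec j)) /\
      (forall x, Omega x -> {for x, continuous (partial j (partial i f))}).

Definition hessian (f : 'rV[R]_n -> R) (x : 'rV[R]_n) : 'M[R]_n :=
  \matrix_(i, j) partial j (partial i f) x.

(* indices in 'I_(n+2): x-coordinates, the y-slot (n+1), the constant slot (n+2) *)
Definition ix (i : 'I_n) : 'I_(n + 2) := lshift 2 i.
Definition it : 'I_(n + 2) := rshift n (ord0 : 'I_2).
Definition i1 : 'I_(n + 2) := rshift n (ord_max : 'I_2).

Definition wvec (x : 'rV[R]_n) (t : R) : 'cV[R]_(n + 2) :=
  col_mx x^T (\col_(k < 2) (if k == ord0 then t else 1)).

(* coefficients of w^T Q w = alpha t^2 + beta(x) t + gamma(x) *)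
Definition alpha (Q : 'M[R]_(n + 2)) : R := Q it it.
Definition beta (Q : 'M[R]_(n + 2)) (x : 'rV[R]_n) : R :=
  \sum_(i < n) (Q (ix i) it + Q it (ix i)) * x 0 i + Q it i1 + Q i1 it.
Definition gamma (Q : 'M[R]_(n + 2)) (x : 'rV[R]_n) : R :=
  \sum_(i < n) \sum_(j < n) Q (ix i) (ix j) * x 0 i * x 0 j
  + \sum_(i < n) (Q (ix i) i1 + Q i1 (ix i)) * x 0 i + Q i1 i1.

Definition discr (Q : 'M[R]_(n + 2)) (x : 'rV[R]_n) : R :=
  beta Q x ^+ 2 - 4 * alpha Q * gamma Q x.

End Defs.

(* Main.v *)
Require Import Defs.
From HB Require Import structures.
From mathcomp Require Import all_boot all_order all_algebra.
From mathcomp Require Import all_classical all_reals all_analysis.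
From mathcomp Require Import ring lra.
Import Order.TTheory GRing.Theory Num.Theory.
Import numFieldNormedType.Exports.
Local Open Scope classical_set_scope.
Local Open Scope ring_scope.

Lemma ord2P (j : 'I_2) : j = ord0 \/ j = ord_max.
Proof. by case: j => [[|[|//]]] ?; [left|right]; apply: val_inj. Qed.

Lemma det2 (F : fieldType) (D : 'M[F]_2) :
  \det D = D ord0 ord0 * D ord_max ord_max - D ord0 ord_max * D ord_max ord0.
Proof.
rewrite (expand_det_row _ ord0) !big_ord_recl big_ord0 addr0 /cofactor !det_mx11 !mxE /=.
rewrite expr0 expr1 mul1r mulN1r mulrN.
have -> : lift ord0 (0 : 'I_1) = ord_max by apply: val_inj.
have -> : lift (ord_max : 'I_2) (0 : 'I_1) = ord0 by apply: val_inj.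
done.
Qed.

Lemma det_special (F : fieldType) n (B : 'M[F]_(n + 2)) (g : F) :
  (forall i, B (lshift 2 i) (rshift n ord_max) = 0) ->
  (forall i, B (rshift n ord_max) (lshift 2 i) = 0) ->
  B (rshift n ord_max) (rshift n ord_max) = 0 ->
  B (rshift n ord0) (rshift n ord_max) = g ->
  B (rshift n ord_max) (rshift n ord0) = g ->
  \det B = - g ^+ 2 * \det (ulsubmx B).
Proof.
move=> h1 h2 h3 h4 h5.
have [g0|gN0] := eqVneq g 0.
  rewrite g0 expr0n /= oppr0 mul0r (expand_det_row _ (rshift n ord_max)) big1 // => j _.
  rewrite -(splitK j); case: (fintype.split j) => j' /=; first by rewrite h2 mul0r.
  by case: (ord2P j') => ->; rewrite ?h3 ?h5 ?g0 mul0r.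
pose Y : 'M[F]_(n, 2) := \matrix_(i, j) (if j == ord_max then - g^-1 * B (lshift 2 i) (rshift n ord0) else 0).
pose E : 'M[F]_(n + 2) := block_mx 1%:M Y 0 1%:M.
have detE : \det E = 1 by rewrite det_ublock !det1 mulr1.
have <- : \det (E *m B *m E^T) = \det B by rewrite !det_mulmx det_tr detE mul1r mulr1.
rewrite -[B in E *m B]submxK tr_block_mx !mulmx_block !trmx1 !trmx0.
rewrite !mul1mx !mul0mx !mulmx1 !mulmx0 !add0r.
have L : lift ord0 (ord0 : 'I_1) = ord_max :> 'I_2 by apply: val_inj.
have L0 : (ord0 == ord_max :> 'I_2) = false by [].
have e1 : ursubmx B + Y *m drsubmx B = 0.
  apply/matrixP => i j; rewrite !mxE big_ord_recl big_ord1 !mxE L eqxx L0.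
  case: (ord2P j) => ->; rewrite ?h1 ?h3 ?h4 ?h5.
    by rewrite !mul0r add0r mulNr mulNr mulrAC mulVf // mul1r addrN.
  by rewrite !mul0r !mulr0 !addr0.
have e2 : Y *m dlsubmx B = 0.
  apply/matrixP => i j; rewrite !mxE big_ord_recl big_ord1 !mxE L eqxx L0 h2.
  by rewrite mul0r mulr0 addr0.
rewrite e1 e2 mul0mx !addr0 det_lblock det2 !mxE h3 h4 h5 mulr0 sub0r expr2 mulNr.
by rewrite mulrN mulrC.
Qed.

Lemma det_block1 (F : comRingType) n1 n2 (X : 'M[F]_(n1, n2)) C D :
  \det (block_mx 1%:M X C D) = \det (D - C *m X).
Proof.
have -> : block_mx 1%:M X C D = block_mx 1%:M 0 C 1%:M *m block_mx 1%:M X 0 (D - C *m X).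
  by rewrite mulmx_block !mul1mx !mul0mx !mulmx1 ?mulmx0 !addr0 addrCA subrr addr0.
by rewrite det_mulmx det_lblock det_ublock !det1 !mul1r.
Qed.

Set Implicit Arguments. Unset Strict Implicit.

Section H.
Variables (R : realType) (n : nat).

Definition bilA m (A : 'M[R]_m) (a b : 'I_m -> R) : R :=
  \sum_k \sum_l a k * A k l * b l.

Lemma bilA_mx m r (A : 'M[R]_m) (M : 'M[R]_(m, r)) p q :
  (M^T *m A *m M) p q = bilA A (fun k => M k p) (fun k => M k q).
Proof.
rewrite /bilA !mxE (exchange_big) /=; apply: eq_bigr => l _.
by rewrite !mxE big_distrl; apply: eq_bigr => k _; rewrite !mxE.
Qed.

Lemma wvec_l (x : 'rV[R]_n) t i : wvec x t (lshift 2 i) 0 = x 0 i.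
Proof. by rewrite /wvec col_mxEu mxE. Qed.
Lemma wvec_t (x : 'rV[R]_n) t : wvec x t (rshift n ord0) 0 = t.
Proof. by rewrite /wvec col_mxEd mxE. Qed.
Lemma wvec_1 (x : 'rV[R]_n) t : wvec x t (rshift n ord_max) 0 = 1.
Proof. by rewrite /wvec col_mxEd mxE. Qed.

Lemma sum_n2 (F : 'I_(n + 2) -> R) :
  \sum_(k < n + 2) F k = \sum_(i < n) F (lshift 2 i) + F (it n) + F (i1 n).
Proof.
rewrite big_split_ord /= big_ord_recl big_ord1 addrA.
by have -> : lift ord0 (ord0 : 'I_1) = ord_max :> 'I_2 by apply: val_inj.
Qed.

Lemma quadE (Q : 'M[R]_(n + 2)) x t :
  ((wvec x t)^T *m Q *m wvec x t) 0 0 = alpha Q * t ^+ 2 + beta Q x * t + gamma Q x.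
Proof.
rewrite bilA_mx /bilA sum_n2.
under eq_bigr do rewrite sum_n2.
rewrite !sum_n2 /it /i1 !wvec_t !wvec_1.
under eq_bigr do rewrite !wvec_l.
under eq_bigr do under eq_bigr do rewrite !wvec_l.
rewrite /alpha /beta /gamma /it /i1 /ix.
set Q00 := Q (rshift n ord0) (rshift n ord0).
set Q01 := Q (rshift n ord0) (rshift n ord_max).
set Q10 := Q (rshift n ord_max) (rshift n ord0).
set Q11 := Q (rshift n ord_max) (rshift n ord_max).
rewrite !big_split /=.
have e1 : \sum_(i < n) x 0 i * Q (lshift 2 i) (rshift n ord0) * t =
   t * \sum_(i < n) Q (lshift 2 i) (rshift n ord0) * x 0 i.
  by rewrite big_distrr; apply: eq_bigr => i _ /=; ring.
have e2 : \sum_(i < n) x 0 i * Q (lshift 2 i) (rshift n ord_max) * 1 =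
   \sum_(i < n) Q (lshift 2 i) (rshift n ord_max) * x 0 i.
  by apply: eq_bigr => i _; ring.
have e3 : \sum_(i < n) t * Q (rshift n ord0) (lshift 2 i) * wvec x t (lshift 2 i) 0 =
   t * \sum_(i < n) Q (rshift n ord0) (lshift 2 i) * x 0 i.
  by rewrite big_distrr; apply: eq_bigr => i _ /=; rewrite wvec_l; ring.
have e4 : \sum_(i < n) 1 * Q (rshift n ord_max) (lshift 2 i) * wvec x t (lshift 2 i) 0 =
   \sum_(i < n) Q (rshift n ord_max) (lshift 2 i) * x 0 i.
  by apply: eq_bigr => i _; rewrite wvec_l; ring.
have e5 : \sum_(i < n) \sum_(j < n) x 0 i * Q (lshift 2 i) (lshift 2 j) * x 0 j =
   \sum_(i < n) \sum_(j < n) Q (lshift 2 i) (lshift 2 j) * x 0 i * x 0 j.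
  by apply: eq_bigr => i _; apply: eq_bigr => j _; ring.
have e6 : forall a b : 'I_n -> R, \sum_(i < n) (a i + b i) * x 0 i =
  \sum_(i < n) a i * x 0 i + \sum_(i < n) b i * x 0 i.
  by move=> a b; rewrite -big_split; apply: eq_bigr => i _; rewrite mulrDl.
rewrite e1 e2 e3 e4 e5 !e6.
ring.
Qed.

Lemma is_derive_bilA m (A : 'M[R]_m) (f h : 'I_m -> 'rV[R]_n -> R)
  (df dh : 'I_m -> R) (z v : 'rV[R]_n) :
  (forall k, is_derive z v (f k) (df k)) ->
  (forall k, is_derive z v (h k) (dh k)) ->
  is_derive z v (fun z => bilA A (fun k => f k z) (fun k => h k z))
     (bilA A df (fun k => h k z) + bilA A (fun k => f k z) dh).
Proof.
move=> Hf Hh.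
have -> : (fun z => bilA A (fun k => f k z) (fun k => h k z)) =
   \sum_(k < m) \sum_(l < m) (A k l *: (f k * h l)).
  apply/funext => z'; rewrite /bilA fct_sumE; apply: eq_bigr => k _.
  rewrite fct_sumE; apply: eq_bigr => l _ /=.
  by change (f k z' * A k l * h l z' = A k l * (f k z' * h l z')); rewrite mulrCA mulrA.
rewrite /bilA -big_split /=.
apply: is_derive_sum => k; rewrite -big_split /=.
apply: is_derive_sum => l.
apply: is_derive_eq.
rewrite /GRing.scale /=.
by ring.
Qed.
Lemma bilA_sym m (A : 'M[R]_m) a b : A^T = A -> bilA A a b = bilA A b a.
Proof.
move=> hA; rewrite /bilA exchange_big; apply: eq_bigr => l _; apply: eq_bigr => k _.
have e : A k l = A l k by move: (congr1 (fun M : 'M[R]_m => M k l) hA); rewrite mxE.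
by rewrite e; ring.
Qed.

Lemma bilA_scaler m (A : 'M[R]_m) a b c :
  bilA A a (fun k => c * b k) = c * bilA A a b.
Proof.
rewrite /bilA big_distrr; apply: eq_bigr => k _; rewrite big_distrr.
by apply: eq_bigr => l _; rewrite mulrCA.
Qed.

Lemma quad_bilA m (Q : 'M[R]_m) (w : 'cV[R]_m) :
  bilA (Q + Q^T) (fun k => w k 0) (fun k => w k 0) = 2 * ((w^T *m Q *m w) 0 0).
Proof.
rewrite -bilA_mx.
have -> : (w^T *m (Q + Q^T) *m w) 0 0 = (w^T *m Q *m w) 0 0 + ((w^T *m Q *m w)^T) 0 0.
  by rewrite mulmxDr mulmxDl mxE !trmx_mul trmxK mulmxA.
have -> : (w^T *m Q *m w)^T 0 0 = (w^T *m Q *m w) 0 0 by rewrite [LHS]mxE.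
by ring.
Qed.

Lemma bilA_g (Q : 'M[R]_(n + 2)) x t :
  bilA (Q + Q^T) (fun k => (k == it n)%:R) (fun k => wvec x t k 0)
  = 2 * alpha Q * t + beta Q x.
Proof.
rewrite /bilA (bigD1 (it n)) //.
have -> : \sum_(k < n + 2 | k != it n) \sum_(l < n + 2) ((k == it n)%:R * (Q + Q^T) k l * wvec x t l 0) = 0.
  by apply: big1 => k kN; rewrite (negbTE kN); apply: big1 => l _; rewrite !mul0r.
rewrite /= addr0.
rewrite eqxx big_split_ord /= big_ord_recl big_ord1 /=.
have L : lift ord0 (ord0 : 'I_1) = ord_max :> 'I_2 by apply: val_inj.
rewrite L wvec_t wvec_1.
under eq_bigr do rewrite wvec_l.
rewrite /alpha /beta /it /i1 /ix !mxE.
under [in RHS]eq_bigr do rewrite addrC.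
under eq_bigr do rewrite !mxE mul1r.
rewrite mul1r mulr1. ring.
Qed.

Lemma is_derive_coord (x v : 'rV[R]_n) (i : 'I_n) :
  is_derive x v (fun z : 'rV[R]_n => z 0 i) (v 0 i).
Proof.
apply: DeriveDef; first exact/diff_derivable/differentiable_coord.
rewrite /derive; apply: cvg_lim => //.
apply: cvg_near_cst; near=> h.
have hN0 : h != 0 by near: h; exact: nbhs_dnbhs_neq.
by rewrite /= !mxE addrK scalerA mulVf // scale1r.
Unshelve. all: by end_near. Qed.

Definition dvec (v : 'rV[R]_n) (t : R) : 'cV[R]_(n + 2) :=
  col_mx v^T (\col_(k < 2) (if k == ord0 then t else 0)).

Lemma is_derive_W {y : 'rV[R]_n -> R} {z v : 'rV[R]_n} (k : 'I_(n + 2)) : derivable y z v ->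
  is_derive z v (fun z => wvec z (y z) k 0) (dvec v (derive y z v) k 0).
Proof.
move=> dy; rewrite -(splitK k); case: (fintype.split k) => k' /=.
  have -> : (fun z : 'rV[R]_n => wvec z (y z) (lshift 2 k') 0) = fun z => z 0 k'.
    by apply/funext => z'; rewrite /wvec col_mxEu mxE.
  by rewrite /dvec col_mxEu mxE; apply: is_derive_coord.
case: (ord2P k') => ->.
  have -> : (fun z : 'rV[R]_n => wvec z (y z) (rshift n ord0) 0) = y.
    by apply/funext => z'; rewrite /wvec col_mxEd mxE.
  by rewrite /dvec col_mxEd mxE /=; apply: derivableP.
have -> : (fun z : 'rV[R]_n => wvec z (y z) (rshift n ord_max) 0) = cst 1.
  by apply/funext => z'; rewrite /wvec col_mxEd mxE.
by rewrite /dvec col_mxEd mxE /=; apply: is_derive_cst.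
Qed.

Lemma is_derive_dvec (c : 'rV[R]_n) {f : 'rV[R]_n -> R} {z v : 'rV[R]_n} (k : 'I_(n + 2)) : derivable f z v ->
  is_derive z v (fun z => dvec c (f z) k 0) (dvec 0 (derive f z v) k 0).
Proof.
move=> dy; rewrite -(splitK k); case: (fintype.split k) => k' /=.
  have -> : (fun z : 'rV[R]_n => dvec c (f z) (lshift 2 k') 0) = cst (c 0 k').
    by apply/funext => z'; rewrite /dvec col_mxEu mxE.
  by rewrite /dvec col_mxEu !mxE; apply: is_derive_cst.
case: (ord2P k') => ->.
  have -> : (fun z : 'rV[R]_n => dvec c (f z) (rshift n ord0) 0) = f.
    by apply/funext => z'; rewrite /dvec col_mxEd mxE.
  by rewrite /dvec col_mxEd mxE /=; apply: derivableP.
have -> : (fun z : 'rV[R]_n => dvec c (f z) (rshift n ord_max) 0) = cst 0.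
  by apply/funext => z'; rewrite /dvec col_mxEd mxE.
by rewrite /dvec col_mxEd mxE /=; apply: is_derive_cst.
Qed.

End H.

Theorem theorem1 (R : realType) (n : nat) (hn : (1 <= n)%N)
  (Omega : set 'rV[R]_n) (hOmega : open Omega)
  (y : 'rV[R]_n -> R) (hy : C2_on Omega y)
  (Q : 'M[R]_(n + 2))
  (hQ : forall x, Omega x -> ((wvec x (y x))^T *m Q *m wvec x (y x)) 0 0 = 0) :
  forall (x : 'rV[R]_n) (s : R), Omega x ->
    (s = 1 \/ s = -1) ->
    2 * alpha Q * y x + beta Q x = s * Num.sqrt (discr Q x) ->
    \det (- s *: hessian y x) * powR (discr Q x) (n%:R / 2 + 1)
      = - \det (Q + Q^T).
Proof.
move=> x s Ox hs hg.
have [_ hyd] := hy.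
have dy : forall i z, Omega z -> derivable y z (evec R i).
  by move=> i z Oz; exact: ((hyd i).1 z Oz).
have ddy : forall i j, derivable (partial i y) x (evec R j).
  by move=> i j; exact: (((hyd i).2.2 j).1 x Ox).
pose A := Q + Q^T.
have symA : A^T = A by apply/matrixP => i j; rewrite !mxE addrC.
pose W z := fun k => wvec z (y z) k 0.
pose dW i z := fun k => dvec (evec R i) (partial i y z) k 0.
pose g := 2 * alpha Q * y x + beta Q x.
have step1 : forall i z, Omega z -> bilA A (W z) (dW i z) = 0.
  move=> i z Oz.
  have [_ Hv] := is_derive_bilA A (fun k => is_derive_W k (dy i z Oz))
                                  (fun k => is_derive_W k (dy i z Oz)).
  have H0 : 'D_(evec R i) (fun z => bilA A (fun k => wvec z (y z) k 0)
                 (fun k => wvec z (y z) k 0)) z = 0.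
    rewrite (@near_eq_derive _ _ _ _ (cst 0)) ?derive_cst //.
    apply: (filterS _ (hOmega z Oz)) => z' Oz'.
    by rewrite /A quad_bilA hQ // mulr0.
  rewrite Hv (bilA_sym _ _ symA) in H0.
  rewrite /W /dW /partial; lra.
have dv0 : forall c : R, (fun k => dvec 0 c k 0) = (fun k => c * (k == it n)%:R).
  move=> c; apply/funext => k; rewrite -(splitK k); case: (fintype.split k) => k' /=.
    by rewrite /dvec col_mxEu !mxE /it eq_lrshift mulr0.
  rewrite /dvec col_mxEd mxE /it eq_rshift.
  by case: (ord2P k') => ->; rewrite ?eqxx ?mulr1 //= mulr0.
have step2 : forall i j, bilA A (dW j x) (dW i x) + hessian y x i j * g = 0.
  move=> i j.
  have [_ Hv] := is_derive_bilA A (fun k => is_derive_W k (dy j x Ox))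
                    (fun k => is_derive_dvec (evec R i) k (ddy i j)).
  have H0 : 'D_(evec R j) (fun z => bilA A (fun k => wvec z (y z) k 0)
                 (fun k => dvec (evec R i) (partial i y z) k 0)) x = 0.
    rewrite (@near_eq_derive _ _ _ _ (cst 0)) ?derive_cst //.
    apply: (filterS _ (hOmega x Ox)) => z' Oz'.
    exact: step1.
  rewrite Hv dv0 bilA_scaler [bilA A ((wvec x (y x))^~ 0) _](bilA_sym _ _ symA) /A bilA_g in H0.
  rewrite /dW /g /hessian mxE /partial.
  rewrite /partial in H0.
  lra.
pose et := fun k : 'I_(n + 2) => (k == it n)%:R : R.
pose Mc (p : 'I_(n + 2)) : 'I_(n + 2) -> R :=
  match fintype.split p with
  | inl i => dW i x
  | inr j => if j == ord0 then et else W x end.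
have McL : forall i, Mc (lshift 2 i) = dW i x.
  by move=> i; rewrite /Mc (unsplitK (inl _ i : 'I_n + 'I_2)).
have McT : Mc (rshift n ord0) = et.
  by rewrite /Mc (unsplitK (inr _ ord0 : 'I_n + 'I_2)) eqxx.
have Mc1 : Mc (rshift n ord_max) = W x.
  by rewrite /Mc (unsplitK (inr _ ord_max : 'I_n + 'I_2)).
pose M : 'M[R]_(n + 2) := \matrix_(k, p) Mc p k.
pose B := M^T *m A *m M.
have BE : forall p q, B p q = bilA A (Mc p) (Mc q).
  move=> p q; rewrite /B bilA_mx; congr bilA; apply/funext => k; rewrite mxE //.
have detM : \det M = 1.
  have ul : ulsubmx M = 1%:M.
    apply/matrixP => i j; rewrite !mxE McL /dW /dvec col_mxEu !mxE.
    by rewrite eqxx.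
  have z1 : forall j, ursubmx M j ord0 = 0.
    by move=> j; rewrite !mxE McT /et /it eq_lrshift.
  have z2 : forall j, dlsubmx M ord_max j = 0.
    by move=> j; rewrite !mxE McL /dW /dvec col_mxEd mxE.
  rewrite -[M]submxK ul det_block1 det2 !mxE.
  rewrite [X in (_ - X) * _ - _]big1 => [|j _]; last by rewrite z1 mulr0.
  rewrite [X in _ * (_ - X) - _]big1 => [|j _]; last by rewrite z2 mul0r.
  rewrite [X in _ - _ * (_ - X)]big1 => [|j _]; last by rewrite z1 mulr0.
  rewrite McT Mc1 /et /W wvec_1 /it eqxx eq_rshift.
  by rewrite (_ : (ord_max == ord0 :> 'I_2) = false) // !subr0 mulr0 subr0 mul1r.
have detAB : \det B = \det A by rewrite /B !det_mulmx det_tr detM mul1r mulr1.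
have ulB : ulsubmx B = - g *: (hessian y x)^T.
  apply/matrixP => i j; rewrite [LHS]mxE [LHS]mxE BE !McL mxE [(_^T) i j]mxE.
  have := step2 j i; lra.
have hA : \det A = - g ^+ 2 * \det (ulsubmx B).
  rewrite -detAB; apply: det_special => [i|i|||].
  - by rewrite BE McL Mc1 (bilA_sym _ _ symA) step1.
  - by rewrite BE McL Mc1 step1.
  - by rewrite BE Mc1 /W /A quad_bilA hQ // mulr0.
  - by rewrite BE McT Mc1 /et /W /A bilA_g.
  - by rewrite BE McT Mc1 (bilA_sym _ _ symA) /et /W /A bilA_g.
have hq := hQ x Ox; rewrite quadE in hq.
have eD : discr Q x = g ^+ 2.
  rewrite /discr /g.
  have -> : gamma Q x = - (alpha Q * y x ^+ 2 + beta Q x * y x) by lra.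
  ring.
have D0 : 0 <= discr Q x by rewrite eD sqr_ge0.
have hsq := sqr_sqrtr D0.
have hs2 : s ^+ 2 = 1 by case: hs => ->; rewrite ?sqrrN expr1n.
have eP : powR (discr Q x) (n%:R / 2 + 1) = Num.sqrt (discr Q x) ^+ n * discr Q x.
  have n0 : n%:R / 2 + 1 != 0 :> R.
    have := ler0n R n; rewrite gt_eqF //; lra.
  rewrite powRD; last by rewrite (negbTE n0).
  rewrite powRr1 // [n%:R / 2]mulrC powRrM powR12_sqrt // powR_mulrn //.
have eg : g = s * Num.sqrt (discr Q x) := hg.
have e2 : - (s * Num.sqrt (discr Q x)) = (- s) * Num.sqrt (discr Q x) by ring.
rewrite eP -/A hA ulB !detZ det_tr eg e2 !exprMn hs2 hsq.
ring.
Qed.
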